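(* Let $0<\gamma\le 1/2$, let $(x,z)$ be an optimal extreme point solution of LP-CVRP-MD with optimum value $\mathrm{opt}_{LP}$, run the sampling procedure described in the context, let $U$ be the set of clients lying on no sampled branching, and let $F$ be a minimum-cost spanning forest of the complete graph on $C\cup R$ (edge costs $c$) in which each connected component contains exactly one vertex of $R\cup(C\setminus U)$. Then $\mathbb E[c(F)]\le e^{-\gamma}\,\mathrm{opt}_{LP}$.
   Context: Problem: nonempty disjoint finite sets $C$ (clients) and $R$ (depots), $V = C\cup R$, a metric $c$ on $V$, integer capacity $k \ge 3$; $c(v,R):=\min_{r\in R}c(v,r)>0$ for every client $v$. Work in the complete bidirected graph on $V$ (directed edges $(a,b)$ of cost $c(a,b)$); for a vector $y$ on directed edges and $S\subseteq V$, $y(\delta^{in}(S))$, $y(\delta^{out}(S))$ are sums over edges entering/leaving $S$. LP-CVRP-MD has variables $x^r_{v,e}\ge 0$ ($r\in R$, $v\in C$, $e$ a directed edge) and $z^r_{v,u}\ge0$ ($r\in R$, $v\in C$, $u\in V$), objective: minimize $\sum_{r,v,e} c(e)x^r_{v,e}$, constraints: (1) $x^r_v(\delta^{out}(u))$ is $2z^r_{v,v}$ if $u=r$, $0$ if $u=v$, $z^r_{v,u}$ otherwise; (2) $x^r_v(\delta^{in}(u))$ is $0$ if $u=r$, $2z^r_{v,v}$ if $u=v$, $z^r_{v,u}$ otherwise (for all $r\in R,v\in C,u\in V$); (3) $x^r_v(\delta^{in}(S))\ge z^r_{v,u}$ whenever $u\in S\subseteq V\setminus\{r\}$; (4) $\sum_{r\in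 R}\sum_{v\in C} z^r_{v,u}=1$ for all $u\in C$; (5) $z^r_{v,u}\le z^r_{v,v}$ for $u,v\in C$; (6) $z^r_{v,u}=0$ if $u,v\in C$ and $c(u,r)>c(v,r)$; (7) $\sum_{u\in C}z^r_{v,u}\le k z^r_{v,v}$. An $r$-branching is a tree rooted at $r$ oriented away from $r$. Sampling procedure: for each $r\in R$, $v\in C$, take $r$-branchings $B_1,B_2,\dots$ (finitely many) with weights $\mu_i\ge0$, $\sum_i\mu_i = 2\gamma z^r_{v,v}$, such that every directed edge $e$ lies in branchings of total weight at most $\gamma x^r_{v,e}$, $v$ lies on every $B_i$, and every client $u\neq v$ lies in branchings of total weight at least $\gamma z^r_{v,u}$ (such a decomposition exists by a theorem of Bang-Jensen, Frank and Jackson). Independently include each $B_i$ with probability $\mu_i$. $c(F)$ denotes the total edge cost of $F$. *)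

(* Defs.v *)
From mathcomp Require Import all_boot all_order all_algebra.
From mathcomp Require Import reals sequences exp.
Set Implicit Arguments. Unset Strict Implicit. Unset Printing Implicit Defensive.
Import Order.TTheory GRing.Theory Num.Theory.
Local Open Scope ring_scope.

(* Vertex set V (a finite type); Dep = R (depots); clients C = ~: Dep. *)

Definition is_metric (R : realType) (V : finType) (c : V -> V -> R) : Prop :=
  [/\ (forall a, c a a = 0),
      (forall a b, a != b -> 0 < c a b),
      (forall a b, c a b = c b a) &
      (forall a b d, c a d <= c a b + c b d)].

(* LP variables: x r v a b = x^r_{v,(a,b)}, z r v u = z^r_{v,u}.
   Coordinates not corresponding to an LP variable (r not a depot,
   v not a client, or a = b) are fixed to 0. *)
Definition lp_feasible (R : realType) (V : finType) (Dep : {set V})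
    (c : V -> V -> R) (k : nat)
    (x : V -> V -> V -> V -> R) (z : V -> V -> V -> R) : Prop :=
  (forall r v a b, ~~ [&& r \in Dep, v \in ~: Dep & a != b] -> x r v a b = 0) /\
      (forall r v u, ~~ ((r \in Dep) && (v \in ~: Dep)) -> z r v u = 0) /\
      (forall r v a b, 0 <= x r v a b) /\
      (forall r v u, 0 <= z r v u) /\
      (forall r v u, r \in Dep -> v \in ~: Dep ->
         \sum_(b : V) x r v u b =
           (if u == r then 2 * z r v v else if u == v then 0 else z r v u)) /\
      (forall r v u, r \in Dep -> v \in ~: Dep ->
         \sum_(a : V) x r v a u =
           (if u == r then 0 else if u == v then 2 * z r v v else z r v u)) /\
      (* (3) cut constraints *)
      (forall r v (S : {set V}) u, r \in Dep -> v \in ~: Dep -> u \in S -> r \notin S ->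
         z r v u <= \sum_(e : V * V | (e.1 \notin S) && (e.2 \in S)) x r v e.1 e.2) /\
      (* (4) *)
      (forall u, u \in ~: Dep -> \sum_(r in Dep) \sum_(v in ~: Dep) z r v u = 1) /\
          (forall r v u, r \in Dep -> v \in ~: Dep -> u \in ~: Dep -> z r v u <= z r v v) /\
          (forall r v u, r \in Dep -> v \in ~: Dep -> u \in ~: Dep ->
             c v r < c u r -> z r v u = 0) /\
          (forall r v, r \in Dep -> v \in ~: Dep ->
             \sum_(u in ~: Dep) z r v u <= k%:R * z r v v).

Definition lp_cost (R : realType) (V : finType) (Dep : {set V})
    (c : V -> V -> R) (x : V -> V -> V -> V -> R) : R :=
  \sum_(r in Dep) \sum_(v in ~: Dep) \sum_(e : V * V | e.1 != e.2)
     c e.1 e.2 * x r v e.1 e.2.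

Definition lp_optimal (R : realType) (V : finType) (Dep : {set V})
    (c : V -> V -> R) (k : nat)
    (x : V -> V -> V -> V -> R) (z : V -> V -> V -> R) : Prop :=
  lp_feasible Dep c k x z /\
  forall x' z', lp_feasible Dep c k x' z' -> lp_cost Dep c x <= lp_cost Dep c x'.

Definition lp_extreme (R : realType) (V : finType) (Dep : {set V})
    (c : V -> V -> R) (k : nat)
    (x : V -> V -> V -> V -> R) (z : V -> V -> V -> R) : Prop :=
  lp_feasible Dep c k x z /\
  forall x1 z1 x2 z2 (lam : R),
    lp_feasible Dep c k x1 z1 -> lp_feasible Dep c k x2 z2 -> 0 < lam < 1 ->
    (forall r v a b, x r v a b = lam * x1 r v a b + (1 - lam) * x2 r v a b) ->
    (forall r v u, z r v u = lam * z1 r v u + (1 - lam) * z2 r v u) ->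
    (forall r v a b, x1 r v a b = x2 r v a b) /\ (forall r v u, z1 r v u = z2 r v u).

Definition dverts (V : finType) (r : V) (B : {set V * V}) : {set V} :=
  r |: ([set e.1 | e in B] :|: [set e.2 | e in B]).

Definition drel (V : finType) (B : {set V * V}) : rel V := fun a b => (a, b) \in B.

Definition is_branching (V : finType) (r : V) (B : {set V * V}) : Prop :=
  [/\ (forall e, e \in B -> e.1 != e.2),
      (forall a, (a, r) \notin B),
      (forall b, b \in dverts r B -> b != r -> #|[set a | (a, b) \in B]| = 1%N) &
      (forall b, b \in dverts r B -> connect (drel B) r b)].

(* The branching decomposition: index set I; branching i is B i, rooted at
   root i, belonging to the pair (root i, cli i), with weight mu i. *)
Definition decomposition_ok (R : realType) (V : finType) (Dep : {set V})
    (gamma : R) (x : V -> V -> V -> V -> R) (z : V -> V -> V -> R)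
    (I : finType) (root cli : I -> V) (B : I -> {set V * V}) (mu : I -> R) : Prop :=
  [/\ (forall i, [/\ root i \in Dep, cli i \in ~: Dep, is_branching (root i) (B i),
                     0 <= mu i & cli i \in dverts (root i) (B i)]),
      (forall r v, r \in Dep -> v \in ~: Dep ->
         \sum_(i | (root i == r) && (cli i == v)) mu i = 2 * gamma * z r v v),
      (forall r v a b, r \in Dep -> v \in ~: Dep ->
         \sum_(i | [&& root i == r, cli i == v & (a, b) \in B i]) mu i
           <= gamma * x r v a b) &
      (forall r v u, r \in Dep -> v \in ~: Dep -> u \in ~: Dep -> u != v ->
         gamma * z r v u <=
           \sum_(i | [&& root i == r, cli i == v & u \in dverts (root i) (B i)]) mu i)].

(* Outcome of the sampling: the set S of included branchings. *)
Definition uncovered (V : finType) (Dep : {set V}) (I : finType)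
    (root : I -> V) (B : I -> {set V * V}) (S : {set I}) : {set V} :=
  [set u in ~: Dep | [forall i in S, u \notin dverts (root i) (B i)]].

Definition sample_prob (R : realType) (I : finType) (mu : I -> R) (S : {set I}) : R :=
  (\prod_(i in S) mu i) * \prod_(i in ~: S) (1 - mu i).

(* Undirected forests in the complete graph on V: an undirected edge {a,b}
   is represented by exactly one of the ordered pairs (a,b), (b,a). *)
Definition uadj (V : finType) (F : {set V * V}) : rel V :=
  fun a b => ((a, b) \in F) || ((b, a) \in F).

Definition is_forest (V : finType) (F : {set V * V}) : Prop :=
  (forall a b, (a, b) \in F -> a != b /\ (b, a) \notin F) /\
  (forall s : seq V, (2 < size s)%N -> uniq s -> ~~ cycle (uadj F) s).

Definition rooted_forest (V : finType) (T : {set V}) (F : {set V * V}) : Prop :=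
  is_forest F /\
  forall a, #|[set t in T | connect (uadj F) a t]| = 1%N.

Definition forest_cost (R : realType) (V : finType) (c : V -> V -> R)
    (F : {set V * V}) : R :=
  \sum_(e in F) c e.1 e.2.

(* Main.v *)
Require Import Defs.
From mathcomp Require Import all_boot all_order all_algebra.
From mathcomp Require Import reals sequences exp.
Set Implicit Arguments. Unset Strict Implicit. Unset Printing Implicit Defensive.
Import Order.TTheory GRing.Theory Num.Theory.
Local Open Scope ring_scope.

Lemma ex_min (R : realType) (I : finType) (P : pred I) (f : I -> R) i0 :
  P i0 -> exists i, P i /\ forall j, P j -> f i <= f j.
Proof. move=> Pi0. case: (arg_minP f Pi0) => i Pi H. by exists i. Qed.

Definition prim_ok (R : realType) (V : finType) (c : V -> V -> R) (A : {set V})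
  (rk : V -> nat) (p : V -> V) :=
  [/\ (forall a, a \in A -> rk a = 0%N), (forall a, a \notin A -> (0 < rk a)%N),
      (forall a, a \notin A -> (rk (p a) < rk a)%N),
      (forall a a', a \notin A -> a' \notin A -> rk a = rk a' -> a = a') &
      (forall a x y, a \notin A -> (rk a <= rk x)%N -> (rk y < rk a)%N -> c a (p a) <= c x y)].

Lemma prim_ind (R : realType) (V : finType) (c : V -> V -> R) n :
  forall A : {set V}, #|~: A| = n -> A != set0 -> exists rk p, prim_ok c A rk p.
Proof.
elim: n => [|n IH] A hn hA.
  exists (fun _ => 0%N), id; split=> //; move=> a; 
  by move/eqP: hn; rewrite cards_eq0 => /eqP/setP/(_ a); rewrite !inE => ->.
have [a1 a1A] : exists a, a \notin A.
  have : (0 < #|~: A|)%N by rewrite hn.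
  by rewrite card_gt0 => /set0Pn [a]; rewrite inE => ?; exists a.
have [b1 b1A] := set0Pn _ hA.
pose P (e : V * V) := (e.1 \notin A) && (e.2 \in A).
have [[a0 b0] [/andP[/= a0A b0A] emin]] := @ex_min R _ P (fun e => c e.1 e.2) (a1, b1)
   (introT andP (conj a1A b1A)).
pose A' := a0 |: A.
have hn' : #|~: A'| = n.
  have := cardsD1 a0 (~: A); rewrite inE a0A hn add1n => -[->].
  by apply: eq_card => x; rewrite !inE negb_or andbC.
have hA' : A' != set0 by apply/set0Pn; exists a0; rewrite !inE eqxx.
have [rk' [p' [r0 r1 r2 r3 r4]]] := IH A' hn' hA'.
exists (fun a => (a \notin A) + rk' a)%N, (fun a => if a == a0 then b0 else p' a).
have rka0 : rk' a0 = 0%N by apply: r0; rewrite !inE eqxx.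
split.
- by move=> a aA; rewrite aA r0 // inE aA orbT.
- by move=> a ->.
- move=> a aA; case: eqP => [->|/eqP na0]; first by rewrite b0A rka0 a0A r0 // inE b0A orbT.
  have aA' : a \notin A' by rewrite !inE negb_or na0.
  rewrite aA add1n ltnS; apply: leq_trans (r2 _ aA'); case: (p' a \notin A) => //.
- move=> a a' aA a'A; rewrite aA a'A !add1n => -[e].
  case: (eqVneq a a0) => [ea|na].
    case: (eqVneq a' a0) => [->//|na']; subst a.
    have : a' \notin A' by rewrite !inE negb_or na'.
    by move/r1; rewrite -e rka0.
  have aA' : a \notin A' by rewrite !inE negb_or na.
  case: (eqVneq a' a0) => [ea'|na'].
    by subst a'; move: (r1 _ aA'); rewrite e rka0.
  by apply: r3 => //; rewrite !inE negb_or ?na ?na'.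
move=> a x y aA; rewrite aA add1n.
case: eqP => [ea|/eqP na].
  subst a; rewrite rka0 => hx hy.
  have xA : x \notin A by apply/negP => xA; move: hx; rewrite xA r0 // inE xA orbT.
  have yA : y \in A by apply/negPn/negP => yA; move: hy; rewrite yA.
  by have := emin (x, y); rewrite /P /= xA yA; apply.
have aA' : a \notin A' by rewrite !inE negb_or na.
move=> hx hy; apply: r4 => //.
  by move: hx; case: (x \notin A) => /= h; rewrite ?add1n ?ltnS // ?add0n; apply: leq_trans h.
move: hy; case: (boolP (y \in A)) => yA /=.
  by rewrite r0 ?inE ?yA ?orbT // => _; apply: r1.
by rewrite add1n ltnS.
Qed.
Lemma layer_ind (R : realType) (I J : finType) (al : I -> R) (be : J -> R) n :
  forall (u : I -> R) (w : J -> R),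
  (#|[set i | (0 < u i)%R]| + #|[set j | (0 < w j)%R]| <= n)%N ->
  (forall i, 0 <= al i) -> (forall j, 0 <= be j) ->
  (forall i, 0 <= u i) -> (forall j, 0 <= w j) ->
  (forall t, 0 <= t -> \sum_i al i * ((t < u i)%R)%:R <= \sum_j be j * ((t < w j)%R)%:R) ->
  \sum_i al i * u i <= \sum_j be j * w j.
Proof.
elim: n => [|n IH] u w Hn Hal Hbe Hu Hw Ht.
  have u0 : forall i, u i = 0.
    move=> i; apply/eqP; rewrite eq_le Hu andbT leNgt; apply/negP => ui.
    move: Hn; rewrite leqn0 addn_eq0 => /andP[/eqP/cards0_eq/setP/(_ i)].
    by rewrite !inE ui.
  have w0 : forall j, w j = 0.
    move=> j; apply/eqP; rewrite eq_le Hw andbT leNgt; apply/negP => wj.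
    move: Hn; rewrite leqn0 addn_eq0 => /andP[_ /eqP/cards0_eq/setP/(_ j)].
    by rewrite !inE wj.
  by rewrite !big1 // => ? _; rewrite ?u0 ?w0 mulr0.
pose P (k : I + J) := match k with inl i => 0 < u i | inr j => 0 < w j end.
pose f (k : I + J) := match k with inl i => u i | inr j => w j end.
have [k0 Pk0 | nP] := pickP P; last first.
  apply: (IH u w) => //.
  have -> : [set i | (0 < u i)%R] = set0 by apply/setP => i; rewrite !inE; exact: (nP (inl i)).
  have -> : [set j | (0 < w j)%R] = set0 by apply/setP => j; rewrite !inE; exact: (nP (inr j)).
  by rewrite !cards0.
have [k [Pk kmin]] := ex_min f Pk0.
set m := f k.
have m0 : 0 < m by case: k Pk {kmin} @m.
have hk : (exists i, 0 < u i /\ u i = m) \/ (exists j, 0 < w j /\ w j = m).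
  by rewrite /m; clear m0; case: k Pk {kmin} @m => [i|j] Pk; [left; exists i | right; exists j].
have um : forall i, 0 < u i -> m <= u i by move=> i ui; exact: (kmin (inl i)).
have wm : forall j, 0 < w j -> m <= w j by move=> j wj; exact: (kmin (inr j)).
pose u' i := if 0 < u i then u i - m else 0.
pose w' j := if 0 < w j then w j - m else 0.
have Hu' : forall i, 0 <= u' i.
  by move=> i; rewrite /u'; case: ifP => // /um; rewrite subr_ge0.
have Hw' : forall j, 0 <= w' j.
  by move=> j; rewrite /w'; case: ifP => // /wm; rewrite subr_ge0.
have u0 : forall i, ~~ (0 < u i) -> u i = 0.
  by move=> i ui; apply/eqP; rewrite eq_le Hu andbT leNgt.
have w0 : forall j, ~~ (0 < w j) -> w j = 0.
  by move=> j wj; apply/eqP; rewrite eq_le Hw andbT leNgt.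
have eu : forall i, u i = u' i + m * ((0 < u i)%R)%:R.
  move=> i; rewrite /u'; case: ifP => ui; first by rewrite mulr1 subrK.
  by rewrite mulr0 addr0 u0 ?ui.
have ew : forall j, w j = w' j + m * ((0 < w j)%R)%:R.
  move=> j; rewrite /w'; case: ifP => wj; first by rewrite mulr1 subrK.
  by rewrite mulr0 addr0 w0 ?wj.
have IH' : \sum_i al i * u' i <= \sum_j be j * w' j.
  apply: (IH u' w') => //; last first.
    move=> t t0; have := Ht (t + m) (addr_ge0 t0 (ltW m0)).
    have tm : 0 < t + m by apply: (le_lt_trans t0); rewrite ltrDl.
    have eu2 : forall i, (t < u' i) = (t + m < u i).
      move=> i; rewrite /u'; case: ifP => ui; first by rewrite ltrBrDr.
      by rewrite u0 ?ui // ltNge t0 ltNge (ltW tm).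
    have ew2 : forall j, (t < w' j) = (t + m < w j).
      move=> j; rewrite /w'; case: ifP => wj; first by rewrite ltrBrDr.
      by rewrite w0 ?wj // ltNge t0 ltNge (ltW tm).
    move=> H; rewrite (eq_bigr (fun i => al i * ((t + m < u i)%R)%:R)); last first.
      by move=> i _; rewrite eu2.
    rewrite [X in _ <= X](eq_bigr (fun j => be j * ((t + m < w j)%R)%:R)) //.
    by move=> j _; rewrite ew2.
  rewrite -ltnS; apply: leq_trans Hn.
  have sub1 : [set i | (0 < u' i)%R] \subset [set i | (0 < u i)%R].
    apply/subsetP => i; rewrite !inE /u'; case: ifP => //; by rewrite ltxx.
  have sub2 : [set j | (0 < w' j)%R] \subset [set j | (0 < w j)%R].
    apply/subsetP => j; rewrite !inE /w'; case: ifP => //; by rewrite ltxx.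
  case: hk => [[i [Pi ei]]|[j [Pj ej]]].
    rewrite -addSn; apply: leq_add; last exact: subset_leq_card.
    apply: proper_card; rewrite properE sub1 /=.
    by apply/subsetPn; exists i; rewrite !inE //= /u' Pi ei subrr ltxx.
  rewrite -addnS; apply: leq_add; first exact: subset_leq_card.
  apply: proper_card; rewrite properE sub2 /=.
  by apply/subsetPn; exists j; rewrite !inE //= /w' Pj ej subrr ltxx.
have H0 := Ht 0 (lexx 0).
rewrite (eq_bigr (fun i => al i * u' i + m * (al i * ((0 < u i)%R)%:R))); last first.
  by move=> i _; rewrite {1}eu mulrDr mulrCA.
rewrite [X in _ <= X](eq_bigr (fun j => be j * w' j + m * (be j * ((0 < w j)%R)%:R))); last first.
  by move=> j _; rewrite {1}ew mulrDr mulrCA.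
rewrite !big_split /= -!mulr_sumr; apply: lerD => //.
by apply: ler_wpM2l => //; apply: ltW.
Qed.

Lemma layer (R : realType) (I J : finType) (al : I -> R) (be : J -> R)
  (u : I -> R) (w : J -> R) :
  (forall i, 0 <= al i) -> (forall j, 0 <= be j) ->
  (forall i, 0 <= u i) -> (forall j, 0 <= w j) ->
  (forall t, 0 <= t -> \sum_i al i * ((t < u i)%R)%:R <= \sum_j be j * ((t < w j)%R)%:R) ->
  \sum_i al i * u i <= \sum_j be j * w j.
Proof. exact: (layer_ind (leqnn _)). Qed.

Lemma lp_lower (R : realType) (V : finType) (Dep : {set V}) (c : V -> V -> R)
  (x : V -> V -> V -> V -> R) (z : V -> V -> V -> R) (rk : V -> nat) (p : V -> V) :
  prim_ok c Dep rk p ->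
  (forall a, c a a = 0) -> (forall a b, 0 <= c a b) -> (forall a b, c a b = c b a) ->
  (forall r v a b, 0 <= x r v a b) ->
  (forall r v (S : {set V}) u, r \in Dep -> v \in ~: Dep -> u \in S -> r \notin S ->
         z r v u <= \sum_(e : V * V | (e.1 \notin S) && (e.2 \in S)) x r v e.1 e.2) ->
  (forall u, u \in ~: Dep -> \sum_(r in Dep) \sum_(v in ~: Dep) z r v u = 1) ->
  \sum_a ((a \notin Dep)%:R * c a (p a)) <= lp_cost Dep c x.
Proof.
move=> [r0 r1 r2 r3 r4] c0 cge csym xge hcut hsum.
pose be (e : V * V) := \sum_(r in Dep) \sum_(v in ~: Dep) x r v e.1 e.2.
have -> : lp_cost Dep c x = \sum_e be e * c e.1 e.2.
  rewrite /lp_cost.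
  transitivity (\sum_(r in Dep) \sum_(v in ~: Dep) \sum_e c e.1 e.2 * x r v e.1 e.2).
    apply: eq_bigr => r _; apply: eq_bigr => v _.
    rewrite [RHS](bigID (fun e : V * V => e.1 != e.2)) /= [X in _ = _ + X]big1 ?addr0 //.
    by move=> e /negPn/eqP ->; rewrite c0 mul0r.
  rewrite (eq_bigr (fun r => \sum_e \sum_(v in ~: Dep) c e.1 e.2 * x r v e.1 e.2)); last first.
    by move=> r _; rewrite exchange_big.
  rewrite exchange_big; apply: eq_bigr => e _.
  rewrite /be mulr_suml; apply: eq_bigr => r _; rewrite mulr_suml.
  by apply: eq_bigr => v _; rewrite mulrC.
apply: layer => [a|e|a|e|t t0].
- by case: (a \notin Dep).
- by apply: sumr_ge0 => r _; apply: sumr_ge0 => v _.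
- exact: cge.
- exact: cge.
pose G := [rel a b | c a b <= t].
have Gsym : connect_sym G by apply: sym_connect_sym => a b; rewrite /G /= csym.
pose K a := [set b | connect G a b].
pose P a := (a \notin Dep) && (t < c a (p a)).
have K1 : forall a b, P a -> b \in K a -> (rk a <= rk b)%N.
  move=> a b /andP[aD ta]; rewrite inE => /connectP [s pth ->].
  have Hp : forall s w, path G w s -> (rk a <= rk w)%N -> (rk a <= rk (last w s))%N.
    elim=> //= y s' IHs w /andP[e pth'] hw; apply: IHs pth' _.
    rewrite leqNgt; apply/negP => hy.
    by move: (r4 a w y aD hw hy) (e) => h1 h2; move: ta; rewrite ltNge (le_trans h1 h2).
  exact: Hp pth (leqnn _).
have aK : forall a, a \in K a by move=> a; rewrite inE connect0.
have K3 : forall a (e : V * V), e.1 \notin K a -> e.2 \in K a -> t < c e.1 e.2.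
  move=> a [b d] /=; rewrite !inE => nb hd; rewrite ltNge; apply/negP => cb.
  move/negP: nb; apply; apply: connect_trans hd _; apply: connect1.
  by rewrite /G /= csym.
have K4 : forall a a' b, P a -> P a' -> b \in K a -> b \in K a' -> a = a'.
  move=> a a' b Pa Pa'; rewrite !inE => ba ba'.
  have h1 : a' \in K a by rewrite inE; apply: connect_trans ba _; rewrite Gsym.
  have h2 : a \in K a' by rewrite inE; apply: connect_trans ba' _; rewrite Gsym.
  move: (K1 _ _ Pa h1) (K1 _ _ Pa' h2) => l1 l2.
  move: Pa Pa' => /andP[aD _] /andP[aD' _].
  by apply: r3 => //; apply/eqP; rewrite eqn_leq l1 l2.
have K5 : forall a, P a -> 1 <= \sum_(e | (e.1 \notin K a) && (e.2 \in K a)) be e.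
  move=> a Pa; have aD : a \in ~: Dep by rewrite inE; case/andP: Pa.
  rewrite -(hsum a aD).
  have -> : \sum_(e | (e.1 \notin K a) && (e.2 \in K a)) be e =
     \sum_(r in Dep) \sum_(v in ~: Dep) \sum_(e | (e.1 \notin K a) && (e.2 \in K a)) x r v e.1 e.2.
    rewrite /be exchange_big; apply: eq_bigr => r _; by rewrite exchange_big.
  apply: ler_sum => r rD; apply: ler_sum => v vC; apply: hcut => //.
  apply/negP => rK; have := K1 _ _ Pa rK; rewrite (r0 _ rD) leqn0 => /eqP ra.
  by case/andP: Pa => aD' _; move: (r1 _ aD'); rewrite ra.
pose cut a (e : V * V) := (e.1 \notin K a) && (e.2 \in K a).
apply: (@le_trans _ _ (\sum_(a | P a) \sum_(e | cut a e) be e)).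
  rewrite [X in _ <= X]big_mkcond /=; apply: ler_sum => a _.
  case: (boolP (P a)) => Pa.
    by move: (Pa) => /andP[-> ->]; rewrite mul1r; apply: K5.
  by move: Pa; rewrite /P; case: (a \notin Dep); case: (t < _) => //= _; rewrite ?mul0r ?mulr0.
have -> : \sum_(a | P a) \sum_(e | cut a e) be e =
          \sum_e be e * \sum_(a | P a) (cut a e)%:R.
  rewrite (eq_bigr (fun a => \sum_e (cut a e)%:R * be e)); last first.
    move=> a _; rewrite big_mkcond /=; apply: eq_bigr => e _.
    by case: (cut a e); rewrite ?mul1r ?mul0r.
  rewrite exchange_big /=; apply: eq_bigr => e _.
  by rewrite mulr_sumr; apply: eq_bigr => a _; rewrite mulrC.
apply: ler_sum => e _; apply: ler_wpM2l.
  by apply: sumr_ge0 => r _; apply: sumr_ge0 => v _.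
case: (pickP (fun a => P a && cut a e)) => [a0 /andP[Pa0 cut0]|none].
  rewrite (bigD1 a0) //= cut0 big1 ?addr0.
    by move: cut0 => /andP[h1 h2]; rewrite (K3 _ _ h1 h2).
  move=> a /andP[Pa na]; case: (boolP (cut a e)) => // /andP[_ h].
  by case/andP: cut0 => _ h0; move: na; rewrite (K4 _ _ _ Pa Pa0 h h0) eqxx.
rewrite big1; first by case: (t < _).
by move=> a Pa; move: (none a); rewrite Pa /= => ->.
Qed.
Lemma parent_forest (V : finType) (T : {set V}) (rk : V -> nat) (p : V -> V) :
  (forall a, a \notin T -> (rk (p a) < rk a)%N) ->
  rooted_forest T [set (a, p a) | a in ~: T].
Proof.
move=> hrk; set F := [set _ | _ in _].
have memF : forall a b, ((a, b) \in F) = (a \notin T) && (b == p a).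
  move=> a b; apply/imsetP/andP => [[x xT [-> ->]]|[aT /eqP ->]].
    by rewrite -in_setC xT eqxx.
  by exists a; rewrite ?in_setC.
have uadjP : forall w y, uadj F w y -> (rk y <= rk w)%N -> y = p w.
  move=> w y; rewrite /uadj !memF => /orP[/andP[_ /eqP//]|/andP[yT /eqP ew]] hy.
  by move: (hrk _ yT); rewrite -ew ltnNge hy.
split; first split.
- move=> a b; rewrite memF => /andP[aT /eqP ->]; split.
    by apply/eqP => e; move: (hrk _ aT); rewrite -e ltnn.
  rewrite memF; apply/negP => /andP[pT /eqP e].
  by move: (hrk _ pT); rewrite -e ltnNge ltnW // hrk.
- move=> s hs us; apply/negP => cs.
  have [s0 s0s] : exists x, x \in s by case: s hs {us cs} => // x ? _; exists x; rewrite inE eqxx.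
  case: (@arg_maxnP _ s0 (fun x => x \in s) rk s0s) => w ws wmax.
  case: (rot_to ws) => i s' es.
  have cs' : cycle (uadj F) (w :: s') by rewrite -es rot_cycle.
  have us' : uniq (w :: s') by rewrite -es rot_uniq.
  have hs' : (2 < size (w :: s'))%N by rewrite -es size_rot.
  have ms' : forall x, x \in w :: s' -> (rk x <= rk w)%N by move=> x; rewrite -es mem_rot; apply: wmax.
  case: s' es cs' us' hs' ms' => [|n [|m s'']] // es cs' us' _ ms'.
  move: cs'; rewrite /cycle rcons_path => /andP[/= /andP[e1 _] e2].
  have h1 : n = p w by apply: uadjP e1 _; apply: ms'; rewrite !inE eqxx orbT.
  have h2 : last m s'' = p w.
    have e2' : uadj F w (last m s'') by move: e2; rewrite /uadj orbC.
    apply: uadjP e2' _; apply: ms'; rewrite !inE; move: (mem_last m s''); rewrite inE => ->; rewrite !orbT //.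
  move: us'; rewrite cons_uniq => /andP[_]; rewrite cons_uniq => /andP[/negP nin _].
  by apply: nin; rewrite h1 -h2 mem_last.
pose g a := if a \in T then a else p a.
pose N := (\max_(a : V) rk a)%N.
have iterT : forall n a, (a \in T) || (rk a <= n)%N -> iter n g a \in T.
  elim=> [|n IHn] a.
    case: (boolP (a \in T)) => //= aT; rewrite leqn0 => /eqP e.
    by move: (hrk _ aT); rewrite e.
  move=> h; rewrite iterSr; apply: IHn; rewrite /g.
  case: (boolP (a \in T)) => aT; first by rewrite aT.
  move: h; rewrite (negbTE aT) /= => h.
  by apply/orP; right; rewrite -ltnS; apply: leq_trans h; apply: hrk.
have gfix : forall n a, a \in T -> iter n g a = a.
  by elim=> // n IHn a aT; rewrite iterS IHn // /g aT.
pose f a := iter N g a.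
have fT : forall a, f a \in T by move=> a; apply: iterT; rewrite leq_bigmax orbT.
have fg : forall a, f (g a) = f a.
  move=> a; rewrite /f -iterSr iterS {1}/g fT //.
have conn : forall n a, connect (uadj F) a (iter n g a).
  elim=> [|n IHn] a; first exact: connect0.
  apply: connect_trans (IHn a) _; rewrite iterS /g; case: ifP => // xT.
  by apply: connect1; rewrite /uadj memF xT eqxx.
have fe : forall x y, uadj F x y -> f x = f y.
  move=> x y; rewrite /uadj !memF => /orP[/andP[xT /eqP ->]|/andP[yT /eqP ->]].
    by rewrite -(fg x) /g (negbTE xT).
  by rewrite -(fg y) /g (negbTE yT).
move=> a.
have -> : [set t in T | connect (uadj F) a t] = [set f a].
  apply/setP => t; rewrite !inE; apply/andP/eqP => [[tT]|->]; last by split; [apply: fT| apply: conn].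
  move/connectP => [s pth et].
  rewrite -[t](gfix N _ tT) -/(f t) et; apply/esym.
  elim: s a pth {et} => //= y s IHs a /andP[e pth]; rewrite (fe _ _ e); exact: IHs.
by rewrite cards1.
Qed.
Lemma sample_avoid (R : realType) (I : finType) (mu : I -> R) (Q : pred I) :
  \sum_(S : {set I}) sample_prob mu S * ([forall i in S, ~~ Q i])%:R
    = \prod_(i | Q i) (1 - mu i).
Proof.
have -> : \prod_(i | Q i) (1 - mu i) = \prod_i (mu i * (~~ Q i)%:R + (1 - mu i)).
  rewrite big_mkcond /=; apply: eq_bigr => i _.
  by case: (Q i) => /=; rewrite ?mulr0 ?add0r // mulr1 addrC subrK.
rewrite (bigA_distr _ _ (fun i => mu i * (~~ Q i)%:R) (fun i => 1 - mu i)) /=.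
apply: eq_bigr => S _.
rewrite /sample_prob [RHS](bigID (mem S)) /=.
rewrite [X in _ = X * _](eq_bigr (fun i => mu i * (~~ Q i)%:R)); last by move=> i iS; rewrite iS.
rewrite [X in _ = _ * X](eq_bigr (fun i => 1 - mu i)); last by move=> i /negbTE iS; rewrite iS.
rewrite big_split /=.
have -> : \prod_(i in S) (~~ Q i)%:R = ([forall i in S, ~~ Q i])%:R :> R.
  case: (boolP [forall i in S, ~~ Q i]) => [/forallP h|/forallPn [i]].
    by rewrite big1 // => i iS; move: (h i); rewrite iS /= => ->.
  rewrite negb_imply => /andP[iS /negPn qi].
  by rewrite (bigD1 i) //= qi mul0r.
rewrite mulrAC; congr (_ * _ * _).
by apply: eq_bigl => i; rewrite inE.
Qed.

Unset Implicit Arguments.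

Theorem lemma5 (R : realType) (V : finType) (Dep : {set V})
    (c : V -> V -> R) (k : nat) (gamma : R)
    (x : V -> V -> V -> V -> R) (z : V -> V -> V -> R)
    (I : finType) (root cli : I -> V) (B : I -> {set V * V}) (mu : I -> R)
    (Fs : {set I} -> {set V * V}) :
  Dep != set0 -> ~: Dep != set0 ->
  is_metric c ->
  (forall v r, v \in ~: Dep -> r \in Dep -> 0 < c v r) ->
  (3 <= k)%N ->
  0 < gamma <= 1 / 2 ->
  lp_optimal Dep c k x z ->
  lp_extreme Dep c k x z ->
  decomposition_ok Dep gamma x z root cli B mu ->
  (forall S : {set I},
     rooted_forest (Dep :|: (~: Dep :\: uncovered Dep root B S)) (Fs S) /\
     forall F', rooted_forest (Dep :|: (~: Dep :\: uncovered Dep root B S)) F' ->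
       forest_cost c (Fs S) <= forest_cost c F') ->
  \sum_(S : {set I}) sample_prob mu S * forest_cost c (Fs S)
    <= expR (- gamma) * lp_cost Dep c x.
Proof.
move=> hD hC hmet hcpos hk /andP[g0 g12] hopt hext hdec hFs.
have [hx0 [hz0 [hxge [hzge [hout [hin [hcut [hsum [h5 [h6 h7]]]]]]]]]] := hopt.1.
case: hmet => c0 cpos csym ctri.
case: hdec => hdi hmu hedge hcov.
have cge : forall a b, 0 <= c a b.
  by move=> a b; case: (eqVneq a b) => [->|/cpos/ltW //]; rewrite c0.
have [rk [p hprim]] := prim_ind c (erefl #|~: Dep|) hD.
have hlow := lp_lower hprim c0 cge csym hxge hcut hsum.
case: (hprim) => r0 r1 r2 r3 r4.
pose U S := uncovered Dep root B S.
pose cost a := c a (p a).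
have hB : forall S, forest_cost c (Fs S) <= \sum_a ((a \in U S)%:R * cost a).
  move=> S; set T := Dep :|: (~: Dep :\: U S).
  have UC : forall a, a \in U S -> a \notin Dep.
    by move=> a; rewrite /U /uncovered inE in_setC => /andP[].
  have eT : forall a, (a \notin T) = (a \in U S).
    move=> a; rewrite /T in_setU in_setD in_setC.
    case: (boolP (a \in U S)) => aU; first by rewrite (negbTE (UC _ aU)).
    by case: (a \in Dep).
  have hr : forall a, a \notin T -> (rk (p a) < rk a)%N.
    by move=> a; rewrite eT => /UC; apply: r2.
  have hrf := parent_forest hr.
  apply: le_trans ((hFs S).2 _ hrf) _.
  rewrite /forest_cost big_imset /=; last by move=> a b _ _ [].
  rewrite big_mkcond /=; apply: ler_sum => a _; rewrite in_setC eT.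
  by case: (a \in U S); rewrite ?mul1r ?mul0r.
have mu01 : forall i, 0 <= mu i <= 1.
  move=> i; case: (hdi i) => rD vC _ m0 _; rewrite m0 /=.
  have h1 : mu i <= \sum_(j | (root j == root i) && (cli j == cli i)) mu j.
    rewrite (bigD1 i) ?eqxx //= lerDl; apply: sumr_ge0 => j _; by case: (hdi j).
  apply: le_trans h1 _; rewrite hmu //.
  have zle : z (root i) (cli i) (cli i) <= 1.
    rewrite -(hsum _ vC) (bigD1 (root i)) //= (bigD1 (cli i)) //= -addrA lerDl.
    apply: addr_ge0; apply: sumr_ge0 => ? _ //; apply: sumr_ge0 => ? _ //.
  have zge := hzge (root i) (cli i) (cli i).
  have g1 : 2 * gamma <= 1.
    by move: g12; rewrite -(@ler_pM2l _ 2) // mul1r mulfV // pnatr_eq0.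
  apply: le_trans zle; rewrite -[X in _ <= X]mul1r; exact: ler_wpM2r.
have Pge : forall S, 0 <= sample_prob mu S.
  move=> S; apply: mulr_ge0; apply: prodr_ge0 => i _; case/andP: (mu01 i) => //.
  by rewrite subr_ge0.
have hP : forall a, a \in ~: Dep ->
    \sum_S sample_prob mu S * (a \in U S)%:R <= expR (- gamma).
  move=> a aC.
  pose Q i := a \in dverts (root i) (B i).
  rewrite (eq_bigr (fun S => sample_prob mu S * ([forall i in S, ~~ Q i])%:R)); last first.
    by move=> S _; rewrite /U /uncovered inE aC.
  rewrite sample_avoid.
  apply: (@le_trans _ _ (\prod_(i | Q i) expR (- mu i))).
    apply: ler_prod => i _; case/andP: (mu01 i) => m0 m1; rewrite subr_ge0 m1 /=.
    exact: expR_ge1Dx.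
  rewrite -expR_sum sumrN ler_expR lerN2.
  rewrite -[gamma]mulr1 -(hsum a aC) mulr_sumr.
  rewrite (partition_big root (mem Dep)) /=; last by move=> i _; case: (hdi i).
  apply: ler_sum => r rD.
  rewrite mulr_sumr (partition_big cli (mem (~: Dep))) /=; last by move=> i _; case: (hdi i).
  apply: ler_sum => v vC.
  case: (eqVneq v a) => [->|nva].
    rewrite (eq_bigl (fun i => (root i == r) && (cli i == a))); last first.
      move=> i; case: (eqVneq (cli i) a) => [e|]; rewrite ?andbT ?andbF //.
      have -> : Q i by rewrite /Q -e; case: (hdi i).
      by [].
    rewrite hmu // -mulrA mulr_natl mulr2n lerDl.
    by apply: mulr_ge0; [apply: ltW | apply: hzge].
  have nav : a != v by rewrite eq_sym.
  apply: le_trans (hcov r v a rD vC aC nav) _.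
  rewrite le_eqVlt; apply/orP; left; apply/eqP; apply: eq_bigl => i; rewrite /Q.
  by case: (_ \in _); case: (root i == r); case: (cli i == v).
apply: (@le_trans _ _ (\sum_S sample_prob mu S * \sum_a ((a \in U S)%:R * cost a))).
  by apply: ler_sum => S _; apply: ler_wpM2l => //; apply: hB.
have -> : \sum_S sample_prob mu S * \sum_a ((a \in U S)%:R * cost a) =
          \sum_a cost a * \sum_S sample_prob mu S * (a \in U S)%:R.
  rewrite (eq_bigr (fun S => \sum_a cost a * (sample_prob mu S * (a \in U S)%:R))); last first.
    move=> S _; rewrite mulr_sumr; apply: eq_bigr => a _.
    by rewrite [RHS]mulrCA [cost a * _]mulrC.
  by rewrite exchange_big; apply: eq_bigr => a _; rewrite mulr_sumr.
apply: (@le_trans _ _ (expR (- gamma) * \sum_a ((a \notin Dep)%:R * c a (p a)))); last first.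
  by apply: ler_wpM2l => //; apply: expR_ge0.
rewrite mulr_sumr; apply: ler_sum => a _.
case: (boolP (a \in Dep)) => aD /=.
  rewrite big1 ?mulr0; last first.
    by move=> S _; rewrite /U /uncovered inE in_setC aD /= mulr0.
  by apply: mulr_ge0; [apply: expR_ge0 | apply: mulr_ge0].
rewrite mul1r mulrC; apply: ler_wpM2r; first exact: cge.
by apply: hP; rewrite inE.
Qed.
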